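(* Let $q$ be a prime power and suppose there exists a linear $(2,t_o,s,q)$-AONT with $2\le t_o$. Then \[ s\le \max\{\,1+(t_o-2)(q+1),\; 2+(t_o-1)(q-1)\,\}.\]
   Context: A linear $(t_i,t_o,s,q)$-AONT is given by an invertible $s\times s$ matrix $M$ over $\mathbb{F}_q$ defining the map $\mathbf{x}\mapsto\mathbf{y}=\mathbf{x}M^{-1}$ on row vectors of $\mathbb{F}_q^s$, such that for every set $I$ of $t_i$ input coordinates and every set $J$ of $s-t_o$ output coordinates, the pair $((x_i)_{i\in I},(y_j)_{j\in J})$ takes every value in $\mathbb{F}_q^{t_i+s-t_o}$ equally often as $\mathbf{x}$ ranges over $\mathbb{F}_q^s$. Equivalently, $M$ is invertible and every $t_o\times t_i$ submatrix of $M$ has rank $t_i$. *)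

(* Defs.v *)
From HB Require Import structures.
From mathcomp Require Import all_boot all_order all_algebra all_field.
Set Implicit Arguments. Unset Strict Implicit. Unset Printing Implicit Defensive.
Import GRing.Theory.
Local Open Scope ring_scope.

(* A to x ti submatrix is
   given by an injective choice of to rows (f) and ti columns (g); the order
   of the chosen rows/columns does not affect the rank. *)
Definition linear_AONT (F : fieldType) (ti to s : nat) (M : 'M[F]_s) : Prop :=
  M \in unitmx /\
  forall (f : 'I_to -> 'I_s) (g : 'I_ti -> 'I_s),
    injective f -> injective g -> \rank (mxsub f g M) = ti.

(* Main.v *)
Require Import Defs.
From mathcomp Require Import all_boot all_order all_algebra all_field.
From mathcomp Require Import zify.
Import GRing.Theory.
Local Open Scope ring_scope.

Lemma key (F : finFieldType) (to s : nat) (M : 'M[F]_s) (i j : 'I_s) (a b : F) :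
  linear_AONT 2 to M -> i != j -> (a != 0) || (b != 0) ->
  (#|[set r : 'I_s | (a * M r i + b * M r j == 0)%R]| < to)%N.
Proof.
move=> [_ HA] ij ab; set S := [set r | _].
rewrite ltnNge; apply/negP => H.
pose f (k : 'I_to) := enum_val (A := S) (widen_ord H k).
pose g (k : 'I_2) := if val k == 0%N then i else j.
have fi : injective f.
  move=> k1 k2 /enum_val_inj h; apply/val_inj; exact: (congr1 val h).
have gi : injective g.
  move=> k1 k2; rewrite /g.
  case: k1 => -[|[|k1]] H1; case: k2 => -[|[|k2]] H2 //=; try (by move=> _; apply: val_inj).
  - by move=> h; move: ij; rewrite -h eqxx.
  - by move=> h; move: ij; rewrite -h eqxx.
have := HA _ _ fi gi; set A := mxsub f g M => rk.
have /row_fullP [B HB] : row_full A by rewrite /row_full rk.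
pose v : 'cV[F]_2 := \col_k (if val k == 0%N then a else b).
have Av : A *m v = 0.
  apply/matrixP => k l; rewrite !mxE !big_ord_recl big_ord0 !mxE /= addr0.
  rewrite /g /= mulrC [M _ j * _]mulrC.
  have := enum_valP (A := S) (widen_ord H k); rewrite inE => /eqP.
  by rewrite /f.
have : v = 0 by rewrite -(mul1mx v) -HB -mulmxA Av mulmx0.
move/matrixP => hv; move: ab.
have := hv 0 0; have := hv 1 0; rewrite !mxE /= => -> ->.
by rewrite eqxx.
Qed.
Section S.
Variables (F : finFieldType) (to s : nat) (M : 'M[F]_s).
Hypothesis HM : linear_AONT 2 to M.

Definition Z (j : 'I_s) := [set r : 'I_s | M r j == 0].
Definition L (i j : 'I_s) (l : F) := [set r : 'I_s | M r i == l * M r j].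
Definition L' (i j : 'I_s) (l : F) := [set r : 'I_s | (M r j != 0) && (M r i == l * M r j)].

Lemma ZB i j : i != j -> (#|Z j| < to)%N.
Proof.
move=> ij; have := @key F to s M i j 0 1 HM ij; rewrite oner_neq0 orbT => /(_ isT).
by congr (_ < _)%N; apply: eq_card => r; rewrite !inE mul0r add0r mul1r.
Qed.

Lemma LB i j l : i != j -> (#|L i j l| < to)%N.
Proof.
move=> ij; have := @key F to s M i j 1 (- l) HM ij; rewrite oner_neq0 /= => /(_ isT).
by congr (_ < _)%N; apply: eq_card => r; rewrite !inE mul1r mulNr subr_eq0.
Qed.

Lemma decomp i j : s = (#|Z j| + \sum_(l : F) #|L' i j l|)%N.
Proof.
rewrite -[s in LHS]card_ord -(cardsC (Z j)); congr addn.
rewrite -sum1_card (partition_big (fun r => M r i / M r j) predT) //=.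
apply: eq_bigr => l _; rewrite -sum1_card; apply: eq_bigl => r; rewrite !inE.
case: (M r j =P 0) => //= /eqP hj; apply/eqP/eqP => h.
  by rewrite -h divfK.
by rewrite h mulfK.
Qed.

End S.
Arguments Z {F s} M j.
Arguments L {F s} M i j l.
Arguments L' {F s} M i j l.
Arguments ZB {F to s M} HM {i j}.
Arguments LB {F to s M} HM {i j} l.
Arguments decomp {F s} M i j.

Lemma cardP (T : finType) (P : {set T}) : #|P| = (\sum_x (x \in P : nat))%N.
Proof. by rewrite -sum1_card big_mkcond /=; apply: eq_bigr => x _; case: (x \in P). Qed.

Theorem mainTheorem17 (F : finFieldType) (q to s : nat) (M : 'M[F]_s) :
  #|F| = q -> (2 <= to)%N -> linear_AONT 2 to M ->
  (s <= maxn (1 + (to - 2) * (q + 1)) (2 + (to - 1) * (q - 1)))%N.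
Proof.
move=> hq hto HM.
case: (leqP s 1) => hs.
  by apply: leq_trans hs _; rewrite leq_max leq_addr.
case: (boolP [exists r : 'I_s, exists i : 'I_s, exists j : 'I_s,
                 (i != j) && (M r i == 0) && (M r j == 0)]).
  move=> /existsP [r /existsP [i /existsP [j /andP [/andP [ij ri] rj]]]].
  rewrite (decomp M i j).
  have h1 : forall l, (#|L' M i j l| <= to - 2)%N.
    move=> l; have := LB HM l ij; rewrite (cardsD1 r) !inE (eqP ri) (eqP rj) mulr0 eqxx /=.
    have : (#|L' M i j l| <= #|L M i j l :\ r|)%N.
      apply: subset_leq_card; apply/subsetP => x; rewrite !inE => /andP [hx ->].
      rewrite andbT; apply: contraNneq hx => ->; exact: rj.
    move=> a b; apply: leq_trans a _; move: b; set x := #|_ :\ _|; clearbody x; move=> b; lia.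
  have h2 : (\sum_(l : F) #|L' M i j l| <= \sum_(l : F) (to - 2))%N.
    by apply: leq_sum => l _.
  rewrite sum_nat_const in h2.
  have := ZB HM ij.
  move: h2; rewrite hq.
  nia.
move=> hN.
have one : forall r : 'I_s, (#|[set i : 'I_s | (M r i == 0)%R]| <= 1)%N.
  move=> r; apply/card_le1_eqP => x y; rewrite !inE => hx hy.
  apply/eqP; apply: contraNT hN => xy; apply/existsP; exists r.
  apply/existsP; exists x; apply/existsP; exists y; by rewrite eq_sym xy hx hy.
have tot : (\sum_(i : 'I_s) #|Z M i| <= s)%N.
  under eq_bigr do rewrite cardP.
  rewrite exchange_big /=.
  rewrite -[X in (_ <= X)%N]card_ord -sum1_card.
  apply: leq_sum => r _; have := one r; rewrite cardP.
  move=> h; apply: leq_trans h; apply: eq_leq; apply: eq_bigr => i _; by rewrite /Z !inE.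
have x0 : 'I_s by exists 0%N; lia.
case: (@arg_minnP _ x0 predT (fun i => #|Z M i|) isT) => i0 _ hi0.
have x1 : {x1 : 'I_s | x1 != i0}.
  case: (i0 =P Ordinal hs) => h.
    have h0 : (0 < s)%N by lia.
    by exists (Ordinal h0); rewrite h; apply/eqP => /(congr1 val).
  by exists (Ordinal hs); apply/eqP => /esym.
case: x1 => x1 hx1.
case: (@arg_minnP _ x1 (fun k => k != i0) (fun i => #|Z M i|) hx1) => j0 hj0 hmin.
have hsum : (#|Z M i0| + (s - 1) * #|Z M j0| <= s)%N.
  apply: leq_trans tot; rewrite (bigD1 i0) //= leq_add2l.
  have -> : (s - 1 = #|predC1 i0|)%N by rewrite cardC1 card_ord; lia.
  rewrite -sum_nat_const; apply: leq_sum => k hk; exact: hmin.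
have hle := hi0 j0 isT.
have h2 : (#|Z M i0| + #|Z M j0| <= 2)%N by nia.
have ij : j0 != i0 by [].
rewrite (decomp M j0 i0) (bigD1 0) //=.
have hL0 : (#|L' M j0 i0 0%R| <= #|Z M j0|)%N.
  apply: subset_leq_card; apply/subsetP => x; rewrite !inE mul0r.
  by case/andP.
have hrest : (\sum_(l : F | l != 0%R) #|L' M j0 i0 l| <= \sum_(l : F | l != 0%R) (to - 1))%N.
  apply: leq_sum => l _; have := LB HM l ij.
  have : (#|L' M j0 i0 l| <= #|L M j0 i0 l|)%N.
    apply: subset_leq_card; apply/subsetP => x; rewrite !inE.
    by case/andP.
  lia.
rewrite sum_nat_const cardC1 hq in hrest.
have := ZB HM ij.
move: hrest; set S := bigop _ _ _ => hrest.
clear hsum hmin tot one.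
rewrite -subn1 mulnC in hrest => hZ.
apply: leq_trans (leq_maxr _ _).
apply: leq_trans (leq_add (leqnn _) (leq_add hL0 hrest)) _.
set P := ((to - 1) * (q - 1))%N.
set a := #|Z M i0|; set b := #|Z M j0|.
have h2b : (a + b <= 2)%N := h2.
lia.
Qed.
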